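(* Let $L,\pi_L,\theta,a$ be as below (so $a^{-1}$ also satisfies the hypothesis). Then $$M(T,\theta,a)=-\theta(-1)\,\omega^{-1}(-1)\,M(T,\theta,a^{-1}).$$
   Context: Let $p\ge5$ be prime; $\zeta_{p^{n+1}}$ compatible primitive $p^{n+1}$-th roots of unity, $K_n=\mathbb Q_p(\zeta_{p^{n+1}})$, $\Gamma_n=\mathrm{Gal}(K_n/K_0)$, $\gamma_0\in\varprojlim\Gamma_n$ acting by $\zeta\mapsto\zeta^{1+p}$. For $a\in\mathbb Z_p^*$: $\omega(a)$ Teichmüller, $\langle a\rangle=a/\omega(a)$, $\gamma_n(a)\in\Gamma_n$: $\zeta_{p^{n+1}}\mapsto\zeta_{p^{n+1}}^{\langle a\rangle}$. $\widehat\Delta$ is the group of characters $\theta:(\mathbb Z/p)^*\cong\Delta\to\mu_{p-1}$ (powers of $\omega$), $\theta(k)$ for $p\nmid k$. Let $L$ be a finite extension of $\mathbb Q_p$, $O_L$ its integers, $\pi_L$ a uniformizer, $\Lambda_L=O_L[[T]]\cong\varprojlim O_L[\Gamma_n]$ with $T\leftrightarrow\gamma_0-1$. For $\theta\in\widehat\Delta$ and $a\in O_L$ with $a(a-1)\not\equiv0\pmod{\pi_L}$, $M_n(\theta,a)=\sum_{1\le k\le p^{n+1}-1,\,p\nmid k}\frac{a^k}{a^{p^{n+1}}-1}\theta(k)\omega^{-1}(k)\gamma_n(k)\in O_L[\Gamma_n]$; these form a compatible system under restriction, and $M(T,\theta,a)\in\Lambda_L$ denotes the corresponding power series (Mirimanoff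 power series). *)

(* Defs.v *)
From HB Require Import structures.
From mathcomp Require Import all_boot all_order all_algebra.
Set Implicit Arguments. Unset Strict Implicit. Unset Printing Implicit Defensive.
Import Order.TTheory GRing.Theory Num.Theory.
Local Open Scope ring_scope.

Definition dvdR (R : comNzRingType) (d x : R) : Prop := exists y : R, x = d * y.

(* O_L for a finite extension L of Q_p, with uniformizer pi, characterised as
   in the paper's setting: a complete discrete valuation ring of
   characteristic 0 with uniformizer pi and finite residue field of
   characteristic p.  (By Cohen's structure theory these are exactly the rings
   of integers of finite extensions of Q_p.) *)
Definition padic_int_ring (p : nat) (R : idomainType) (pi : R) : Prop :=
  [/\
      pi != 0 /\ pi \isn't a GRing.unit,
      (forall x : R, x != 0 -> exists u : R, exists m : nat,
           u \is a GRing.unit /\ x = u * pi ^+ m),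
      (forall m : nat, (m.+1)%:R != 0 :> R),
      dvdR pi (p%:R) /\
      (exists s : seq R, forall x : R, exists2 y, y \in s & dvdR pi (x - y))
    &
      (forall u : nat -> R, (forall m, dvdR (pi ^+ m) (u m.+1 - u m)) ->
         exists x : R, forall m, dvdR (pi ^+ m) (x - u m))].

(* Teichmueller character omega : Z_p^* -> mu_{p-1}(O_L), restricted to the
   integers prime to p (which is all that the statement uses):
   omega(k)^(p-1) = 1 and omega(k) = k mod pi.  These conditions determine
   omega uniquely in O_L (Hensel). *)
Definition teichmuller (p : nat) (R : idomainType) (pi : R) (w : int -> R) : Prop :=
  forall k : int, ~~ (p%:Z %| k)%Z ->
    w k ^+ p.-1 = 1 /\ dvdR pi (w k - k%:~R).

(* Gamma_n is identified with the subgroup {x = 1 mod p} of (Z/p^{n+1})^*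
   via the cyclotomic character.  gamma_n(k) corresponds to <k> mod p^{n+1}
   = k * omega(k)^{-1} mod p^{n+1}, and omega(k) = k^(p^n) mod p^{n+1}. *)
Definition gamma_n (p n k : nat) : 'Z_(p ^ n.+1) :=
  (inZp k * (inZp (k ^ (p ^ n)))^-1)%R.

(* (theta * omega^{-1})(k) with theta = omega^i *)
Definition thw (R : idomainType) (w : int -> R) (i : nat) (k : int) : R :=
  w k ^+ i * (w k)^-1.

(* M_n(theta, a) in O_L[Gamma_n], represented by its coefficient function on
   (Z/p^{n+1}) (supported on the image of Gamma_n). *)
Definition Mn (p : nat) (R : idomainType) (w : int -> R) (i : nat) (a : R)
    (n : nat) : {ffun 'Z_(p ^ n.+1) -> R} :=
  [ffun g => \sum_(1 <= k < p ^ n.+1 | (~~ (p %| k)%N) && (gamma_n p n k == g))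
      a ^+ k / (a ^+ (p ^ n.+1) - 1) * thw w i k%:Z].

(* Main.v *)
From HB Require Import structures.
From mathcomp Require Import all_boot all_order all_algebra.
From mathcomp Require Import zify ring.
Require Import Defs.
Import Order.TTheory GRing.Theory Num.Theory.
Set Implicit Arguments. Unset Strict Implicit.
Local Open Scope ring_scope.

Lemma frob_exists (R : comNzRingType) (p : nat) (x y : R) : prime p ->
  exists z : R, (x + y) ^+ p = x ^+ p + y ^+ p + p%:R * z.
Proof.
move=> pp; have p1 : (1 < p)%N by apply: prime_gt1.
exists (\sum_(0 <= i < p.-1) x ^+ (p - i.+1) * y ^+ i.+1 *+ ('C(p, i.+1) %/ p)).
rewrite mulr_sumr.
have -> : \sum_(0 <= i < p.-1) p%:R * (x ^+ (p - i.+1) * y ^+ i.+1 *+ ('C(p, i.+1) %/ p))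
   = \sum_(0 <= i < p.-1) (x ^+ (p - i.+1) * y ^+ i.+1 *+ 'C(p, i.+1)).
  rewrite big_nat_cond [RHS]big_nat_cond; apply: eq_bigr => i /andP[/andP[_ ip] _].
  rewrite mulr_natl -mulrnA divnK //; apply: prime_dvd_bin => //.
  apply/andP; split; lia.
rewrite exprDn -(big_mkord xpredT (fun i => x ^+ (p - i) * y ^+ i *+ 'C(p, i))).
clear pp; move: p1; case: p => [|[|q]] // _ /=.
rewrite big_nat_recr //= big_nat_recl //= subn0 subnn bin0 binn expr0 mulr1 mul1r.
rewrite !mulr1n.
by rewrite addrAC.
Qed.

Section S.
Context (R : idomainType) (pi : R).
Lemma dvdR_add (x y : R) : dvdR pi x -> dvdR pi y -> dvdR pi (x + y).
Proof. by move=> [a ->] [b ->]; exists (a + b); rewrite mulrDr. Qed.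
Lemma dvdR_opp (x : R) : dvdR pi x -> dvdR pi (- x).
Proof. by move=> [a ->]; exists (- a); rewrite mulrN. Qed.
Lemma dvdR_sub (x y : R) : dvdR pi x -> dvdR pi y -> dvdR pi (x - y).
Proof. by move=> hx hy; apply: dvdR_add => //; apply: dvdR_opp. Qed.
Lemma dvdR_mull (x y : R) : dvdR pi x -> dvdR pi (y * x).
Proof. by move=> [a ->]; exists (y * a); rewrite mulrCA. Qed.
Lemma dvdR_0 : dvdR pi 0.
Proof. by exists 0; rewrite mulr0. Qed.
End S.

Lemma unit_ndvd (p : nat) (R : idomainType) (pi : R) (x : R) :
  padic_int_ring p pi -> ~ dvdR pi x -> x \is a GRing.unit.
Proof.
case=> [[pi0 piu] dvr _ _ _] nd.
have x0 : x != 0 by apply: contra_not_neq nd => ->; apply: dvdR_0.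
have [u [m [uu hx]]] := dvr x x0.
case: m hx => [|m] hx; first by rewrite hx expr0 mulr1.
by exfalso; apply: nd; exists (u * pi ^+ m); rewrite hx exprS mulrCA.
Qed.

Lemma pi_ndvd1 (p : nat) (R : idomainType) (pi : R) :
  padic_int_ring p pi -> ~ dvdR pi 1.
Proof.
case=> [[pi0 piu] _ _ _ _] [y hy].
by move/negP: piu; apply; apply/unitrP; exists y; rewrite mulrC -hy.
Qed.

Lemma ndvd_unit (p : nat) (R : idomainType) (pi : R) (x : R) :
  padic_int_ring p pi -> x \is a GRing.unit -> ~ dvdR pi x.
Proof.
move=> HR xu [y hy]; apply: (pi_ndvd1 HR); exists (y * x^-1).
by rewrite mulrA -hy divrr.
Qed.

Lemma ndvd_frob (p : nat) (R : idomainType) (pi : R) (b : R) :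
  prime p -> odd p -> padic_int_ring p pi -> ~ dvdR pi (b - 1) -> ~ dvdR pi (b ^+ p - 1).
Proof.
move=> pp op HR nd hd.
have [z hz] := frob_exists b (-1) pp.
have u1 : (b - 1) ^+ p \is a GRing.unit by rewrite unitrX // (unit_ndvd HR nd).
apply: (ndvd_unit HR u1).
have [_ _ _ [hp _] _] := HR.
rewrite hz -signr_odd op expr1; apply: dvdR_add => //.
by rewrite mulrC; apply: dvdR_mull.
Qed.

Lemma ndvd_pow (p : nat) (R : idomainType) (pi : R) (a : R) :
  prime p -> odd p -> padic_int_ring p pi -> ~ dvdR pi (a - 1) ->
  forall j, ~ dvdR pi (a ^+ (p ^ j) - 1).
Proof.
move=> pp op HR nd; elim=> [|j IH]; first by rewrite expn0 expr1.
by rewrite expnSr exprM; apply: ndvd_frob.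
Qed.

Lemma teich_uniq (p : nat) (R : idomainType) (pi : R) (u v : R) :
  prime p -> padic_int_ring p pi -> u ^+ p.-1 = 1 -> v ^+ p.-1 = 1 ->
  dvdR pi (u - v) -> u = v.
Proof.
move=> pp HR hu hv hd.
have p1 : (1 < p)%N by apply: prime_gt1.
have vu : v \is a GRing.unit.
  have e : p.-1 = p.-2.+1 by lia.
  by apply/unitrP; exists (v ^+ p.-2); rewrite -exprSr -e hv; split=> //; rewrite -exprS -e hv.
set z := u * v^-1.
have hz : z ^+ p.-1 = 1 by rewrite /z exprMn exprVn hu hv invr1 mulr1.
have hz1 : dvdR pi (z - 1).
  have -> : z - 1 = v^-1 * (u - v) by rewrite mulrBr mulVr // mulrC.
  exact: dvdR_mull.
have : (z - 1) * \sum_(i < p.-1) z ^+ i = 0 by rewrite -subrX1 hz subrr.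
move/eqP; rewrite mulf_eq0 => /orP[]; first by rewrite subr_eq0 /z => /eqP h;
  rewrite -(divrK vu u) h mul1r.
move/eqP=> hs; exfalso; apply: (pi_ndvd1 HR).
have hd2 : forall i : 'I_p.-1, dvdR pi (z ^+ i - 1).
  move=> i; rewrite subrX1; have [y ->] := hz1; exists (y * \sum_(j < i) z ^+ j).
  by rewrite mulrA.
have hsum : dvdR pi (\sum_(i < p.-1) (z ^+ i - 1)).
  elim/big_ind: _ => //; [exact: dvdR_0|exact: dvdR_add].
rewrite sumrB hs sub0r sumr_const card_ord in hsum.
have [_ _ _ [hp _] _] := HR.
have e : (p - p.-1)%N = 1%N by lia.
have -> : (1 : R) = p%:R - (1 *+ p.-1) by rewrite -natrB ?leq_pred // e.
apply: dvdR_sub => //. by have := dvdR_opp hsum; rewrite opprK.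
Qed.

Lemma gamma_rev (p n k : nat) : odd p -> (k <= p ^ n.+1)%N -> (1 < p)%N ->
  gamma_n p n (p ^ n.+1 - k) = gamma_n p n k.
Proof.
move=> op hk p1.
have P1 : (1 < p ^ n.+1)%N by rewrite -{1}(expn0 p) ltn_exp2l.
rewrite /gamma_n -!Zp_nat !natrX natrB // pchar_Zp // sub0r exprNn -signr_odd oddX op orbT expr1.
by rewrite mulN1r invrN mulrNN.
Qed.

Lemma dvdz_nat (p k : nat) : (p%:Z %| k%:Z)%Z = (p %| k)%N.
Proof. by []. Qed.

Unset Implicit Arguments.
Theorem lemma3p2 (p : nat) (Hp : prime p) (H5 : (5 <= p)%N)
    (R : idomainType) (pi : R) (HR : padic_int_ring p pi)
    (w : int -> R) (Hw : teichmuller p pi w)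
    (i : 'I_(p.-1)) (a : R) (Ha : ~ dvdR pi (a * (a - 1))) :
  forall (n : nat) (g : 'Z_(p ^ n.+1)),
    Mn p w i a n g = - (w (-1) ^+ i * (w (-1))^-1) * Mn p w i a^-1 n g.
Proof.
move=> n g.
have p1 : (1 < p)%N by apply: prime_gt1.
have op : odd p by case: (even_prime Hp) => // e; rewrite e in H5.
set P := (p ^ n.+1)%N.
have P1 : (1 < P)%N by rewrite /P -{1}(expn0 p) ltn_exp2l.
have pP : (p %| P)%N by rewrite /P expnS dvdn_mulr.
have nda : ~ dvdR pi a by move=> h; apply: Ha; rewrite mulrC; apply: dvdR_mull.
have nda1 : ~ dvdR pi (a - 1) by move=> h; apply: Ha; apply: dvdR_mull.
have au : a \is a GRing.unit by apply: (unit_ndvd HR).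
have cu : a ^+ P - 1 \is a GRing.unit by apply: (unit_ndvd HR); apply: ndvd_pow.
have [_ _ _ [hp _] _] := HR.
have [wm1 dm1] : w (-1) ^+ p.-1 = 1 /\ dvdR pi (w (-1) - (-1)%:~R).
  by apply: Hw; rewrite dvdzE /= dvdn1 neq_ltn p1 orbT.
have wunit : forall x : R, x ^+ p.-1 = 1 -> x \is a GRing.unit.
  move=> x hx; have e : p.-1 = p.-2.+1 by lia.
  by apply/unitrP; exists (x ^+ p.-2); rewrite -exprSr -e hx; split=> //; rewrite -exprS -e hx.
unfold Mn. rewrite !ffunE -/P big_nat_rev mulr_sumr big_nat_cond [RHS]big_nat_cond.
apply: eq_big => k.
  case hk: (1 <= k < P)%N => //=.
  have -> : (1 + P - k.+1)%N = (P - k)%N by lia.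
  rewrite dvdn_subr ?gamma_rev //; lia.
move=> /andP[hk /andP[hpk _]].
have e : (1 + P - k.+1)%N = (P - k)%N by lia.
rewrite e; rewrite e dvdn_subr // in hpk; last by lia.
have [wk dk] := Hw k%:Z hpk.
have [wPk dPk] : w (P - k)%N ^+ p.-1 = 1 /\ dvdR pi (w (P - k)%N - (P - k)%N%:Z%:~R).
  by apply: Hw; rewrite dvdz_nat dvdn_subr //; lia.
have wPkE : w (P - k)%N = w (-1) * w k.
  apply: (teich_uniq Hp HR) => //; first by rewrite exprMn wm1 wk mulr1.
  set U := _ - _ in dPk; set A := _ - _ in dm1; set B := _ - _ in dk.
  have -> : w (P - k)%N - w (-1) * w k = U + P%:R - A * (B + k%:R) + B.
    have m1 : (-1)%:~R = -1 :> R by [].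
    rewrite /U /A /B /= m1 -!pmulrn natrB; last by lia.
    ring.
  apply: dvdR_add => //; apply: dvdR_sub; [apply: dvdR_add => // | by rewrite mulrC; apply: dvdR_mull].
  by rewrite /P natrX exprS mulrC; apply: dvdR_mull.
rewrite /thw wPkE.
have u1 := wunit _ wm1; have uk := wunit _ wk.
have kP : (k <= P)%N by lia.
rewrite exprMn invrM // exprB // ?exprVn //.
have aP : a ^+ P \is a GRing.unit by rewrite unitrX.
have -> : a ^- P - 1 = - ((a ^+ P)^-1 * (a ^+ P - 1)).
  by rewrite mulrBr mulVr // mulr1 opprB.
rewrite invrN invrM ?unitrV // invrK.
set c := (a ^+ P - 1)^-1; set x := (a ^+ k)^-1; set y := (w k)^-1; set z := (w (-1))^-1.
ring.
Qed.
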